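(* Let $G=(V,E)$ be a finite, undirected, connected, unweighted graph, let $R\subseteq V$ be a set of landmarks, and let $\mathcal{L}=(M,L)$ be the labelling scheme of $G$ with respect to $R$ (defined in the context). For any two vertices $u,v\in V$, define $$d^{\top}_{uv}=\min\{\delta_{ur}+d_M(r,r')+\delta_{r'v} \mid (r,\delta_{ur})\in L(u),\ (r',\delta_{r'v})\in L(v)\},$$ with the convention $\min\emptyset=+\infty$. Then $d^{\top}_{uv}\geq d_G(u,v)$.
   Context: $d_G(x,y)$ denotes the shortest-path distance (number of edges) between $x$ and $y$ in $G$, and $P_{xy}$ denotes the set of all shortest paths between $x$ and $y$ in $G$; $V(p)$ is the vertex set of a path $p$. The meta-graph is $M=(R,E_R,\sigma)$, the edge-weighted graph on vertex set $R$ in which, for distinct $r,r'\in R$, $\{r,r'\}\in E_R$ iff at least one shortest path in $G$ between $r$ and $r'$ contains no vertex of $R$ other than $r$ and $r'$, and such an edge has weight $\sigma(r,r')=d_G(r,r')$. $d_M(r,r')$ denotes the weighted shortest-path distance between $r$ and $r'$ in $M$ (with $d_M(r,r)=0$ and $d_M(r,r')=+\infty$ if no path exists). The path labelling $L$ assigns to each $u\in V\setminus R$ the label $L(u)=\{(r,\delta_{ur}) \mid r\in R,\ \delta_{ur}=d_G(u,r),\ \exists p\in P_{ur}\text{ with } V(p)\cap R=\{r\}\}$, and to each landmark $u\in R$ the empty label $L(u)=\emptyset$. The pair $\mathcal{L}=(M,L)$ is the labelling scheme. *)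

(* Defs.v *)
From mathcomp Require Import all_boot.
From Stdlib Require Import ClassicalEpsilon.
Set Implicit Arguments. Unset Strict Implicit. Unset Printing Implicit Defensive.

(* Extended naturals N ∪ {+oo}: [None] is +oo. *)
Definition ole (a b : option nat) : Prop :=
  match a, b with
  | _, None => True
  | None, Some _ => False
  | Some x, Some y => x <= y
  end.

Definition is_least (P : nat -> Prop) (n : nat) : Prop :=
  P n /\ forall m, P m -> n <= m.

Definition natmin (P : nat -> Prop) : option nat :=
  match excluded_middle_informative (exists n, is_least P n) with
  | left H => Some (proj1_sig (constructive_indefinite_description _ H))
  | right _ => None
  end.

Section Labelling.
Variables (T : finType) (e : rel T) (R : {set T}).

(* A walk from x to y: the sequence p of vertices after x; its vertex set is x :: p,
   its length (number of edges) is size p. *)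
Definition walk (x y : T) (p : seq T) : Prop := path e x p /\ last x p = y.

Definition dG (x y : T) : option nat :=
  natmin (fun n => exists p, walk x y p /\ size p = n).

Definition shortest_path (x y : T) (p : seq T) : Prop :=
  walk x y p /\ dG x y = Some (size p).

(* Edge {r,r'} of the meta-graph M. *)
Definition medge (r r' : T) : Prop :=
  [/\ r \in R, r' \in R, r != r' &
   exists p, shortest_path r r' p /\
     forall w, w \in r :: p -> w \in R -> w = r \/ w = r'].

(* mwalk x y s w : s is a walk in M from x to y (vertices after x) of total
   weight w, each edge {a,b} weighing sigma(a,b) = d_G(a,b). *)
Fixpoint mwalk (x y : T) (s : seq T) (w : nat) : Prop :=
  match s with
  | [::] => x = y /\ w = 0
  | z :: s' => medge x z /\
      exists w1 w2, dG x z = Some w1 /\ mwalk z y s' w2 /\ w = w1 + w2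
  end.

Definition dM (r r' : T) : option nat :=
  natmin (fun w => exists s, mwalk r r' s w).

(* (r, delta) ∈ L(u). Landmarks get the empty label. *)
Definition inL (u r : T) (delta : nat) : Prop :=
  [/\ u \notin R, r \in R, dG u r = Some delta &
   exists p, shortest_path u r p /\ forall w, w \in u :: p -> w \in R -> w = r].

Definition dtop (u v : T) : option nat :=
  natmin (fun n => exists r du r' dv dm,
    [/\ inL u r du, inL v r' dv, dM r r' = Some dm & n = du + dm + dv]).

End Labelling.

(* Main.v *)
Require Import Defs.
From mathcomp Require Import all_boot.
From Stdlib Require Import Classical ClassicalEpsilon FunctionalExtensionality.
Set Implicit Arguments. Unset Strict Implicit.

Lemma natmin_some (P : nat -> Prop) d : natmin P = Some d -> is_least P d.
Proof.
rewrite /natmin; case: excluded_middle_informative => // H [<-].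
exact: proj2_sig (constructive_indefinite_description _ H).
Qed.

Lemma least_exists (P : nat -> Prop) n : P n -> exists m, is_least P m.
Proof.
elim: n {-2}n (leqnn n) => [|N IH] n Hn Pn.
  exists n; split => // m _; move: Hn; rewrite leqn0 => /eqP ->; done.
destruct (classic (exists k, P k /\ k < n)) as [[k [Pk Hk]]|Hno].
  apply: (IH k) => //; rewrite -ltnS; exact: leq_trans Hk Hn.
exists n; split => // m Pm; rewrite leqNgt; apply/negP => Hm; apply: Hno; eauto.
Qed.

Lemma natmin_le (P : nat -> Prop) n : P n -> exists d, natmin P = Some d /\ d <= n.
Proof.
move=> Pn; have [m Hm] := least_exists Pn.
rewrite /natmin; case: excluded_middle_informative => [H|H]; last by exfalso; eauto.
eexists; split; first reflexivity.
case: (proj2_sig (constructive_indefinite_description _ H)) => _ Hl; exact: Hl.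
Qed.

Section S.
Variables (T : finType) (e : rel T) (R : {set T}).
Hypothesis e_sym : symmetric e.

Lemma walk_cat x y z p q : walk e x y p -> walk e y z q -> walk e x z (p ++ q).
Proof.
move=> [P1 L1] [P2 L2]; split; first by rewrite cat_path P1 L1 P2.
by rewrite last_cat L1.
Qed.

Lemma walk_rev x y p : walk e x y p -> walk e y x (rev (belast x p)).
Proof.
move=> [P1 L1]; split.
  rewrite -L1 rev_path.
  have -> : (fun z : T => e^~ z) = e by apply: FunctionalExtensionality.functional_extensionality => a; apply: FunctionalExtensionality.functional_extensionality => b; rewrite e_sym.
  done.
case/lastP: p P1 L1 => [|q w] _ /=; first by move=> ->.
by rewrite last_rcons belast_rcons rev_cons last_rcons.
Qed.

Lemma mwalk_walk s : forall x y w, mwalk e R x y s w -> exists p, walk e x y p /\ size p = w.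
Proof.
elim: s => [|z s IH] x y w /=.
  by move=> [-> ->]; exists [::]; split => //; split.
move=> [[_ _ _ [p [[Wp Dp] _]]] [w1 [w2 [D1 [M2 ->]]]]].
have [q [Wq Sq]] := IH _ _ _ M2.
exists (p ++ q); split; first exact: walk_cat Wp Wq.
rewrite size_cat Sq; move: Dp; rewrite D1 => -[->]; done.
Qed.
End S.

Theorem mainTheorem1 (T : finType) (e : rel T) (R : {set T})
  (e_sym : symmetric e) (e_irr : irreflexive e)
  (e_conn : forall x y : T, connect e x y)
  (u v : T) :
  ole (dG e u v) (dtop e R u v).
Proof.
case Ht: (dtop e R u v) => [n|]; last by case: (dG e u v).
have [[r [du [r' [dv [dm [[_ _ Du [p1 [[W1 S1] _]]] [_ _ Dv [p2 [[W2 S2] _]]] DM ->]]]]]] _] := natmin_some Ht.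
have [[s Ms] _] := natmin_some DM.
have [q [Wq Sq]] := mwalk_walk Ms.
have W := walk_cat (walk_cat W1 Wq) (walk_rev e_sym W2).
rewrite /dG; have [d [-> Hd]] := natmin_le (P := fun n => exists p, walk e u v p /\ size p = n) (ex_intro _ _ (conj W erefl)).
move: Hd; rewrite !size_cat size_rev size_belast Sq.
move: S1 S2; rewrite Du Dv => -[<-] [<-]; done.
Qed.
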